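(* Let spacetime be Minkowski spacetime. Let $x^\mu(\tau)$ be the worldline of an arbitrarily accelerated observer with proper time $\tau$, let $e_{(0)}{}^\mu(\tau)=dx^\mu/d\tau$ be its 4-velocity and let $e_{(i)}(\tau)$, $i=1,2,3$, be its (possibly rotating) orthonormal spatial triad along the worldline. Extend this tetrad to a reference frame $e_a(\bar x^\mu)$ by parallel transporting (with respect to the Levi-Civita connection) the observer's tetrad $e_a(\tau)$ to all neighboring points of the spacelike hyperplane orthogonal to $e_{(0)}(\tau)$, for each $\tau$; here $\bar x^\mu$ are the observer's local coordinates. If $e_a(\bar x^\mu)$ is taken as the teleparallel frame, then the gravitational energy-momentum density $t^{\mu a}$ vanishes (on the region where this frame is defined).
   Context: Signature $(+,-,-,-)$. A tetrad (frame) $e_a=e_a{}^\mu\partial_\mu$ with coframe $\theta^a=e^a{}_\mu dx^\mu$ satisfies $g_{\mu\nu}=\eta_{ab}e^a{}_\mu e^b{}_\nu$; Latin (tangent) indices are raised/lowered with $\eta_{ab}$, Greek ones with $g_{\mu\nu}$, and indices are converted between the two types with the tetrad. Taking $e_a$ as the teleparallel frame means the (Weitzenböck) torsion is $T^a{}_{\mu\nu}=\partial_\mu e^a{}_\nu-\partial_\nu e^a{}_\mu$. Define $T_a=T^b{}_{ba}$, the superpotential $\Sigma^{\lambda\mu\nu}=\tfrac14\big(T^{\lambda\mu\nu}+T^{\mu\lambda\nu}-T^{\nu\lambda\mu}\big)+\tfrac12\big(g^{\lambda\nu}T^{\mu}-g^{\lambda\mu}T^{\nu}\big)$, the torsion scalar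 $T=\Sigma^{abc}T_{abc}$, and the gravitational energy-momentum density $t^{\mu a}=k\big(4\Sigma^{bc\mu}T_{bc}{}^{a}-e^{a\mu}T\big)$ with $k=1/(16\pi)$. *)

(* Defs.v *)
From HB Require Import structures.
From mathcomp Require Import all_boot all_order all_algebra.
From mathcomp Require Import all_classical all_reals all_analysis.
Set Implicit Arguments. Unset Strict Implicit. Unset Printing Implicit Defensive.
Import Order.TTheory GRing.Theory Num.Theory.
Import numFieldNormedType.Exports.
Local Open Scope ring_scope.

Section Teleparallel.
Variable R : realType.
Local Notation V4 := 'rV[R]_4.
Local Notation M4 := 'M[R]_4.

(* Minkowski metric, signature (+,-,-,-); index 0 is time.  eta^{ab} = eta_{ab}. *)
Definition etaM (a b : 'I_4) : R :=
  if a == b then (if a == ord0 then 1 else -1) else 0.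

Definition mink (u v : V4) : R := \sum_(m < 4) etaM m m * u 0 m * v 0 m.

(* unit vector along coordinate m; derive f x (coord_dir m) = partial_m f (x) *)
Definition coord_dir (m : 'I_4) : V4 := delta_mx 0 m.

(* ---------- Teleparallel quantities of a frame field given in coordinates.
   F x a mu = e_a^mu (x)  (rows = tangent index a, columns = coordinate index mu). *)
Section Frame.
Variable F : V4 -> M4.

(* coframe: cof x a mu = e^a_mu, the dual basis: sum_mu e^a_mu e_b^mu = delta^a_b *)
Definition cof (x : V4) : M4 := (invmx (F x))^T.

Definition gmet (x : V4) : M4 :=
  \matrix_(m, n) \sum_(a < 4) \sum_(b < 4) etaM a b * cof x a m * cof x b n.
Definition ginv (x : V4) : M4 := invmx (gmet x).

Definition torsion (x : V4) (a m n : 'I_4) : R :=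
  derive (fun y => cof y a n) x (coord_dir m) - derive (fun y => cof y a m) x (coord_dir n).

Definition torG (x : V4) (r m n : 'I_4) : R :=
  \sum_(a < 4) F x a r * torsion x a m n.
Definition torL (x : V4) (r m n : 'I_4) : R :=
  \sum_(s < 4) gmet x r s * torG x s m n.
Definition torU (x : V4) (l m n : 'I_4) : R :=
  \sum_(p < 4) \sum_(q < 4) ginv x m p * ginv x n q * torG x l p q.
Definition torvL (x : V4) (n : 'I_4) : R := \sum_(r < 4) torG x r r n.
Definition torvU (x : V4) (m : 'I_4) : R := \sum_(n < 4) ginv x m n * torvL x n.

Definition superpot (x : V4) (l m n : 'I_4) : R :=
  4^-1 * (torU x l m n + torU x m l n - torU x n l m)
  + 2^-1 * (ginv x l n * torvU x m - ginv x l m * torvU x n).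

Definition superpotT (x : V4) (a b c : 'I_4) : R :=
  \sum_(l < 4) \sum_(m < 4) \sum_(n < 4)
     cof x a l * cof x b m * cof x c n * superpot x l m n.
Definition torT (x : V4) (a b c : 'I_4) : R :=
  \sum_(d < 4) \sum_(m < 4) \sum_(n < 4)
     etaM a d * torsion x d m n * F x b m * F x c n.

Definition torscalar (x : V4) : R :=
  \sum_(a < 4) \sum_(b < 4) \sum_(c < 4) superpotT x a b c * torT x a b c.

Definition kappa : R := (16 * pi)^-1.

(* t^{mu a} = k (4 Sigma^{bc mu} T_{bc}^a - e^{a mu} T), with
   Sigma^{bc mu} = e^b_l e^c_r Sigma^{l r mu}, T_{bc}^a = eta^{ad} T_{bcd},
   e^{a mu} = eta^{ab} e_b^mu *)
Definition gravEM (x : V4) (m a : 'I_4) : R :=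
  kappa * (4 * (\sum_(b < 4) \sum_(c < 4)
      (\sum_(l < 4) \sum_(r < 4) cof x b l * cof x c r * superpot x l r m)
      * (\sum_(d < 4) etaM a d * torT x b c d))
   - (\sum_(b < 4) etaM a b * F x b m) * torscalar x).

End Frame.

(* Observer coordinates xb = (tau, xi^1, xi^2, xi^3) label the spacetime point
   Phi xb = z(tau) + xi^i e_(i)(tau) on the hyperplane orthogonal to e_(0)(tau). *)
Definition obsPhi (z : R -> V4) (E : 'I_4 -> R -> V4) (xb : V4) : V4 :=
  z (xb 0 ord0) + \sum_(i < 4 | i != ord0) xb 0 i *: E i (xb 0 ord0).

(* Jacobian: jac f x m n = d f^n / d x^m *)
Definition jac (f : V4 -> V4) (x : V4) : M4 :=
  \matrix_(m, n) (derive f x (coord_dir m)) 0 n.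

Definition spatial_scale (s : R) (x : V4) : V4 :=
  \row_m (if m == ord0 then x 0 m else s * x 0 m).

(* Cartesian components of a frame field given as a function of the
   observer coordinates: e xb a = Cartesian components of e_a at Phi xb. *)
Definition frame_cart (e : V4 -> 'I_4 -> V4) (x : V4) : M4 :=
  \matrix_(a, n) e x a 0 n.

(* Components e_a^{mubar} of that frame in the observer coordinates xb *)
Definition frame_obs (z : R -> V4) (E : 'I_4 -> R -> V4) (e : V4 -> 'I_4 -> V4)
  (x : V4) : M4 := frame_cart e x *m invmx (jac (obsPhi z E) x).

Definition smooth_curve (f : R -> V4) : Prop :=
  forall (n : nat) (t : R), derivable (iter n (fun g : R -> V4 => derive1 g) f) t 1.

End Teleparallel.

(* Main.v *)
Require Import Defs.
From HB Require Import structures.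
From mathcomp Require Import all_boot all_order all_algebra.
From mathcomp Require Import all_classical all_reals all_analysis.
From mathcomp Require Import ring lra.
Import Order.TTheory GRing.Theory Num.Theory.
Import numFieldNormedType.Exports.
Local Open Scope ring_scope.

Section C.
Variable R : realType.
Definition etan (a : nat) : R := if a == 0%N then 1 else -1.
Variable w : nat -> nat -> R.
Definition Kn (a b c : nat) : R :=
  (if (c == 0%N) && (b != 0%N) then w a b else 0) - (if (b == 0%N) && (c != 0%N) then w a c else 0).
Definition vn (c : nat) : R := \sum_(a < 4) Kn a a c.
Definition Sn (a b c : nat) : R :=
  4^-1 * (etan b * etan c * Kn a b c + etan a * etan c * Kn b a c - etan a * etan b * Kn c a b)
  + 2^-1 * ((a == c)%:R * etan a * etan b * vn b - (a == b)%:R * etan a * etan c * vn c).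
Definition Tn : R := \sum_(a < 4) \sum_(b < 4) \sum_(c < 4) Sn a b c * (etan a * Kn a b c).
Definition Gn (e a : nat) : R :=
  4 * (\sum_(b < 4) \sum_(c < 4) Sn b c e * (etan a * etan b * Kn b c a)) - (e == a)%:R * etan a * Tn.

Hypothesis w11 : w 1%N 1%N = 0.
Hypothesis w22 : w 2%N 2%N = 0.
Hypothesis w33 : w 3%N 3%N = 0.
Hypothesis w21 : w 2%N 1%N = - w 1%N 2%N.
Hypothesis w31 : w 3%N 1%N = - w 1%N 3%N.
Hypothesis w32 : w 3%N 2%N = - w 2%N 3%N.

Lemma vnE c : vn c = if c == 0%N then 0 else - w 0%N c.
Proof.
rewrite /vn !big_ord_recl !big_ord0 /bump /= /Kn /=.
case: c => [|c] /=; rewrite ?w11 ?w22 ?w33; field; rewrite ?pnatr_eq0 ?oner_eq0 //=.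
Qed.

Ltac ex4 := rewrite !big_ord_recl !big_ord0 /bump /=.

Lemma Tn0 : Tn = 0.
Proof.
rewrite /Tn; ex4. rewrite /Sn !vnE /Kn /etan /bump /=.
rewrite ?w11 ?w22 ?w33 ?w21 ?w31 ?w32. field; rewrite ?pnatr_eq0 ?oner_eq0 //=.
Qed.

Lemma Gn0 (e a : nat) : (e < 4)%N -> (a < 4)%N -> Gn e a = 0.
Proof.
move=> he ha; rewrite /Gn Tn0 mulr0 subr0; ex4.
rewrite /Sn !vnE /Kn /etan /bump /=.
case: e he => [|[|[|[|//]]]] _; case: a ha => [|[|[|[|//]]]] _ /=;
rewrite ?w11 ?w22 ?w33 ?w21 ?w31 ?w32; field; rewrite ?pnatr_eq0 ?oner_eq0 //=.
Qed.
End C.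

Section Htor.
Variable R : realType.
Variables (cn : nat -> R) (qn : nat -> nat -> R).
Hypothesis c0 : cn 0%N != 0.
Definition wq (a b : nat) : R := etan R a * qn a b / cn 0%N.
Definition Cfn (b mu : nat) : R := if mu == 0%N then cn b else (b == mu)%:R.

Lemma htor_nat (a m n : nat) : (m < 4)%N -> (n < 4)%N ->
  \sum_(b < 4) \sum_(c < 4) Cfn b m * Cfn c n * Kn R wq a b c =
  (if (n == 0%N) && (m != 0%N) then etan R a * qn a m else 0)
  - (if (m == 0%N) && (n != 0%N) then etan R a * qn a n else 0).
Proof.
move=> hm hn; rewrite !big_ord_recl !big_ord0 /bump /= /Cfn /Kn /wq /=.
case: m hm => [|[|[|[|//]]]] _; case: n hn => [|[|[|[|//]]]] _ /=; field; try exact: c0.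
Qed.
End Htor.

Section Sums.
Variable R : realType.
Implicit Types (f g : 'I_4 -> R).

Lemma sum_only (g : 'I_4 -> R) i : (forall j, j != i -> g j = 0) -> \sum_(j < 4) g j = g i.
Proof.
move=> H; rewrite (bigD1 i) //= big1 ?addr0 // => j /H //.
Qed.

Lemma etaMd (a b : 'I_4) : a != b -> etaM R a b = 0.
Proof. by rewrite /etaM => /negPf ->. Qed.

Lemma eta2 (a : 'I_4) : etaM R a a * etaM R a a = 1.
Proof. rewrite /etaM eqxx; case: (a == ord0); ring. Qed.

Lemma sum_etaL (a : 'I_4) (f : 'I_4 -> R) : \sum_(d < 4) etaM R a d * f d = etaM R a a * f a.
Proof. by apply: sum_only => j ja; rewrite etaMd ?mul0r // eq_sym. Qed.

Lemma sum_swap (g : 'I_4 -> R) (k : 'I_4 -> 'I_4 -> R) :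
  \sum_(q < 4) g q * (\sum_(b < 4) k q b) = \sum_(b < 4) \sum_(q < 4) g q * k q b.
Proof.
under eq_bigr do rewrite big_distrr /=.
by rewrite exchange_big.
Qed.

Lemma sum_swap2 (g h : 'I_4 -> R) (k : 'I_4 -> 'I_4 -> R) :
  \sum_(q < 4) g q * (\sum_(b < 4) h b * k b q) = \sum_(b < 4) h b * (\sum_(q < 4) g q * k b q).
Proof.
under eq_bigr do rewrite big_distrr /=.
rewrite exchange_big /=; apply: eq_bigr => b _; rewrite big_distrr /=.
by apply: eq_bigr => q _; rewrite mulrCA.
Qed.

End Sums.

Section Frame.
Variable R : realType.
Variable F : 'rV[R]_4 -> 'M[R]_4.
Variable x : 'rV[R]_4.
Hypothesis hF : F x \in unitmx.
Local Notation cf := (cof F x).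
Local Notation Fx := (F x).
Local Notation eta a := (etaM R a a).

Lemma C1 b a : \sum_(m < 4) Fx b m * cf a m = (b == a)%:R.
Proof.
have := congr1 (fun M : 'M[R]_4 => M b a) (mulmxV hF).
by rewrite !mxE /cof => <-; apply: eq_bigr => m _; rewrite mxE.
Qed.

Lemma C2 m n : \sum_(a < 4) cf a m * Fx a n = (m == n)%:R.
Proof.
have := congr1 (fun M : 'M[R]_4 => M m n) (mulVmx hF).
by rewrite !mxE /cof => <-; apply: eq_bigr => a _; rewrite mxE.
Qed.

Lemma C3 d (f : 'I_4 -> R) : \sum_(p < 4) Fx d p * (\sum_(b < 4) cf b p * f b) = f d.
Proof.
rewrite sum_swap (@sum_only R _ d).
  by under eq_bigr do rewrite mulrA; rewrite -big_distrl /= C1 eqxx mul1r.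
move=> j jd; under eq_bigr do rewrite mulrA.
by rewrite -big_distrl /= C1 eq_sym (negPf jd) mul0r.
Qed.

Lemma C4 m (f : 'I_4 -> R) : \sum_(a < 4) cf a m * (\sum_(n < 4) Fx a n * f n) = f m.
Proof.
rewrite sum_swap (@sum_only R _ m).
  by under eq_bigr do rewrite mulrA; rewrite -big_distrl /= C2 eqxx mul1r.
move=> j jd; under eq_bigr do rewrite mulrA.
by rewrite -big_distrl /= C2 eq_sym (negPf jd) mul0r.
Qed.

Definition Eta : 'M[R]_4 := \matrix_(a, b) etaM R a b.

Lemma EtaEta : Eta *m Eta = 1%:M.
Proof.
apply/matrixP => a b; rewrite !mxE.
under eq_bigr do rewrite !mxE.
rewrite sum_etaL; have [<-|ab] := eqVneq a b; first by rewrite eta2 ?eqxx.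
by rewrite (@etaMd R a b ab) mulr0.
Qed.

Lemma gmetE : gmet F x = invmx Fx *m Eta *m (invmx Fx)^T.
Proof.
apply/matrixP => m n; rewrite !mxE.
transitivity (\sum_(a < 4) eta a * cf a m * cf a n).
  apply: eq_bigr => a _; rewrite (@sum_only R _ a) // => b ba.
  by rewrite (@etaMd R a b) ?mul0r // eq_sym.
apply: eq_bigr => a _; rewrite !mxE.
under eq_bigr do rewrite !mxE.
rewrite (@sum_only R _ a) /cof ?mxE; first by rewrite (mulrC (eta a)).
move=> b ba; by rewrite (@etaMd R b a) ?mulr0.
Qed.

Lemma ginvE : ginv F x = Fx^T *m Eta *m Fx.
Proof.
have H : gmet F x *m (Fx^T *m Eta *m Fx) = 1%:M.
  rewrite gmetE -!mulmxA (mulmxA (invmx Fx)^T) -trmx_mul mulmxV // trmx1 mul1mx.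
  by rewrite (mulmxA Eta) EtaEta mul1mx mulVmx.
have [u1 u2] := mulmx1_unit H.
by rewrite /ginv -[RHS]mul1mx -(mulVmx u1) -[(_ *m gmet F x) *m _]mulmxA H mulmx1.
Qed.

Lemma ginvE' m n : ginv F x m n = \sum_(d < 4) Fx d m * eta d * Fx d n.
Proof.
rewrite ginvE !mxE; apply: eq_bigr => d _; rewrite !mxE.
under eq_bigr do rewrite !mxE.
rewrite (@sum_only R _ d) // => j jd; by rewrite etaMd ?mulr0 // eq_sym.
Qed.

Lemma raise m (f : 'I_4 -> R) :
  \sum_(p < 4) ginv F x m p * (\sum_(b < 4) cf b p * f b) = \sum_(b < 4) Fx b m * eta b * f b.
Proof.
under eq_bigr do rewrite ginvE' big_distrl /=.
rewrite exchange_big /=; apply: eq_bigr => d _.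
under eq_bigr do rewrite -mulrA.
by rewrite -big_distrr /= C3.
Qed.


Lemma C5 a (f : 'I_4 -> R) : \sum_(l < 4) cf a l * (\sum_(b < 4) Fx b l * f b) = f a.
Proof.
have E b : \sum_(l < 4) cf a l * (Fx b l * f b) = (\sum_(l < 4) Fx b l * cf a l) * f b.
  by rewrite big_distrl; apply: eq_bigr => l _ /=; ring.
rewrite sum_swap (@sum_only R _ a); first by rewrite E C1 eqxx mul1r.
by move=> j jd; rewrite E C1 (negPf jd) mul0r.
Qed.

Variable K : 'I_4 -> 'I_4 -> 'I_4 -> R.
Hypothesis htor : forall a m n,
  torsion F x a m n = \sum_(b < 4) \sum_(c < 4) cf b m * cf c n * K a b c.

Lemma htor' a m n : torsion F x a m n = \sum_(b < 4) cf b m * (\sum_(c < 4) cf c n * K a b c).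
Proof. by rewrite htor; apply: eq_bigr => b _; rewrite big_distrr; apply: eq_bigr => c _ /=; rewrite mulrA. Qed.

Definition coordT (S : 'I_4 -> 'I_4 -> 'I_4 -> R) l m n :=
  \sum_(a < 4) Fx a l * (\sum_(b < 4) Fx b m * (\sum_(c < 4) Fx c n * S a b c)).

Lemma coordT_ext S1 S2 l m n : (forall a b c, S1 a b c = S2 a b c) -> coordT S1 l m n = coordT S2 l m n.
Proof. by move=> H; rewrite /coordT; under eq_bigr do under eq_bigr do under eq_bigr do rewrite H. Qed.

Lemma coordT_add S1 S2 l m n :
  coordT S1 l m n + coordT S2 l m n = coordT (fun a b c => S1 a b c + S2 a b c) l m n.
Proof.
rewrite /coordT -big_split; apply: eq_bigr => a _ /=; rewrite -mulrDr -big_split; congr (_ * _).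
apply: eq_bigr => b _ /=; rewrite -mulrDr -big_split; congr (_ * _).
by apply: eq_bigr => c _ /=; rewrite -mulrDr.
Qed.

Lemma coordT_scale k S l m n :
  k * coordT S l m n = coordT (fun a b c => k * S a b c) l m n.
Proof.
rewrite /coordT big_distrr; apply: eq_bigr => a _ /=; rewrite mulrCA big_distrr; congr (_ * _).
apply: eq_bigr => b _ /=; rewrite mulrCA big_distrr; congr (_ * _).
by apply: eq_bigr => c _ /=; rewrite mulrCA.
Qed.

Lemma coordT_opp S l m n :
  - coordT S l m n = coordT (fun a b c => - S a b c) l m n.
Proof.
rewrite -mulN1r coordT_scale; apply: coordT_ext => a b c; by rewrite mulN1r.
Qed.

Lemma coordT_swap12 S l m n : coordT S m l n = coordT (fun a b c => S b a c) l m n.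
Proof. by rewrite /coordT sum_swap2. Qed.

Lemma coordT_cyc S l m n : coordT S n l m = coordT (fun a b c => S c a b) l m n.
Proof.
rewrite /coordT sum_swap2; apply: eq_bigr => b _; congr (_ * _).
by rewrite sum_swap2.
Qed.

Lemma L_torG l p q :
  torG F x l p q = \sum_(b < 4) cf b p * (\sum_(c < 4) cf c q * (\sum_(a < 4) Fx a l * K a b c)).
Proof.
rewrite /torG; under eq_bigr do rewrite htor'.
rewrite [LHS]sum_swap2; apply: eq_bigr => b _; congr (_ * _).
by rewrite [LHS]sum_swap2.
Qed.

Definition Uf a b c := eta b * eta c * K a b c.

Lemma L_torU l m n : torU F x l m n = coordT Uf l m n.
Proof.
rewrite /torU.
have E p : \sum_(q < 4) ginv F x m p * ginv F x n q * torG F x l p q =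
   ginv F x m p * (\sum_(b < 4) cf b p *
      (\sum_(c < 4) Fx c n * eta c * (\sum_(a < 4) Fx a l * K a b c))).
  under eq_bigr do rewrite -mulrA; rewrite -big_distrr /=; congr (_ * _).
  under eq_bigr do rewrite L_torG; rewrite sum_swap2; apply: eq_bigr => b _; congr (_ * _).
  exact: raise.
under eq_bigr do rewrite E. rewrite raise.
rewrite /coordT [RHS]sum_swap2; apply: eq_bigr => b _; rewrite [in RHS]sum_swap2 -mulrA; congr (_ * _).
rewrite big_distrr /=; apply: eq_bigr => c _; rewrite !big_distrr /=.
apply: eq_bigr => a _; rewrite /Uf; ring.
Qed.

Definition vK c := \sum_(a < 4) K a a c.

Lemma L_torvL n : torvL F x n = \sum_(c < 4) cf c n * vK c.
Proof.
rewrite /torvL /torG exchange_big /=.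
under eq_bigr do under eq_bigr do rewrite htor'.
under eq_bigr do rewrite C3.
rewrite exchange_big /=; apply: eq_bigr => c _; by rewrite big_distrr.
Qed.

Lemma L_torvU m : torvU F x m = \sum_(c < 4) Fx c m * eta c * vK c.
Proof. by rewrite /torvU; under eq_bigr do rewrite L_torvL; rewrite raise. Qed.

Lemma L_gt1 l m n : ginv F x l n * torvU F x m =
  coordT (fun a b c => (a == c)%:R * eta a * eta b * vK b) l m n.
Proof.
rewrite ginvE' L_torvU /coordT big_distrl /=; apply: eq_bigr => a _.
rewrite big_distrr [RHS]big_distrr /=; apply: eq_bigr => b _.
rewrite (@sum_only R _ a) ?eqxx; first by rewrite mul1r; ring.
by move=> c ca; rewrite eq_sym (negPf ca) !mul0r mulr0.
Qed.

Lemma coordT_swap23 S l m n : coordT S l n m = coordT (fun a b c => S a c b) l m n.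
Proof. by rewrite /coordT; apply: eq_bigr => a _; rewrite sum_swap2. Qed.

Lemma L_gt2 l m n : ginv F x l m * torvU F x n =
  coordT (fun a b c => (a == b)%:R * eta a * eta c * vK c) l m n.
Proof. by rewrite L_gt1 coordT_swap23. Qed.

Definition Sf a b c := 4^-1 * (Uf a b c + Uf b a c - Uf c a b)
  + 2^-1 * ((a == c)%:R * eta a * eta b * vK b - (a == b)%:R * eta a * eta c * vK c).

Lemma L_superpot l m n : superpot F x l m n = coordT Sf l m n.
Proof.
rewrite /superpot !L_torU (coordT_swap12 Uf l m n) (coordT_cyc Uf l m n) L_gt1 L_gt2.
rewrite !coordT_opp !coordT_add !coordT_scale coordT_add.
by apply: coordT_ext => a b c; rewrite /Sf.
Qed.

Lemma contr_last S l m c :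
  \sum_(n < 4) cf c n * coordT S l m n = \sum_(a < 4) Fx a l * (\sum_(b < 4) Fx b m * S a b c).
Proof.
rewrite /coordT [LHS]sum_swap2; apply: eq_bigr => a _; congr (_ * _).
rewrite [LHS]sum_swap2; apply: eq_bigr => b _; congr (_ * _).
exact: C5.
Qed.

Lemma nest3 (A B C : 'I_4 -> R) (X : 'I_4 -> 'I_4 -> 'I_4 -> R) :
  \sum_(l < 4) \sum_(m < 4) \sum_(n < 4) A l * B m * C n * X l m n =
  \sum_(l < 4) A l * (\sum_(m < 4) B m * (\sum_(n < 4) C n * X l m n)).
Proof.
apply: eq_bigr => l _; rewrite big_distrr; apply: eq_bigr => m _ /=.
rewrite big_distrr big_distrr; apply: eq_bigr => n _ /=; ring.
Qed.

Lemma L_superpotT a b c : superpotT F x a b c = Sf a b c.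
Proof.
rewrite /superpotT nest3.
under eq_bigr do under eq_bigr do rewrite (eq_bigr _ (fun n _ => congr1 (fun t => cf c n * t) (L_superpot _ _ n))) contr_last.
under eq_bigr do rewrite sum_swap2; under eq_bigr do under eq_bigr do rewrite C5.
exact: C5.
Qed.

Lemma L_contr2 b c m :
  \sum_(l < 4) \sum_(r < 4) cf b l * cf c r * superpot F x l r m = \sum_(e < 4) Fx e m * Sf b c e.
Proof.
transitivity (\sum_(l < 4) cf b l * (\sum_(r < 4) cf c r * coordT Sf l r m)).
  apply: eq_bigr => l _; rewrite big_distrr; apply: eq_bigr => r _ /=.
  by rewrite L_superpot mulrA.
under eq_bigr do rewrite /coordT sum_swap2; under eq_bigr do under eq_bigr do rewrite C5.
exact: C5.
Qed.

Lemma L_torT b c d : torT F x b c d = eta b * K b c d.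
Proof.
rewrite /torT -(@sum_etaL R b (fun d' => K d' c d)); apply: eq_bigr => d' _.
transitivity (etaM R b d' * (\sum_(m < 4) Fx c m * (\sum_(n < 4) Fx d n * torsion F x d' m n))).
  rewrite big_distrr; apply: eq_bigr => m _ /=; rewrite !big_distrr; apply: eq_bigr => n _ /=; ring.
congr (_ * _).
under eq_bigr do under eq_bigr do rewrite htor'.
under eq_bigr do rewrite sum_swap2; under eq_bigr do under eq_bigr do rewrite C3.
exact: C3.
Qed.

Definition Tsc := \sum_(a < 4) \sum_(b < 4) \sum_(c < 4) Sf a b c * (eta a * K a b c).

Lemma L_torscalar : torscalar F x = Tsc.
Proof.
rewrite /torscalar /Tsc; apply: eq_bigr => a _; apply: eq_bigr => b _; apply: eq_bigr => c _.
by rewrite L_superpotT L_torT.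
Qed.

Lemma L_gravEM m a : gravEM F x m a = kappa R * (4 * (\sum_(e < 4) Fx e m *
    (\sum_(b < 4) \sum_(c < 4) Sf b c e * (eta a * eta b * K b c a))) - eta a * Fx a m * Tsc).
Proof.
rewrite /gravEM L_torscalar sum_etaL; congr (_ * (_ * _ - _)).
transitivity (\sum_(b < 4) \sum_(c < 4) (\sum_(e < 4) Fx e m * Sf b c e) * (eta a * (eta b * K b c a))).
  apply: eq_bigr => b _; apply: eq_bigr => c _; rewrite L_contr2; congr (_ * _).
  by rewrite (@sum_etaL R a (fun d => torT F x b c d)) L_torT.
under eq_bigr do under eq_bigr do rewrite big_distrl /=.
under eq_bigr do rewrite exchange_big /=.
rewrite exchange_big /=.
apply: eq_bigr => e _; rewrite big_distrr; apply: eq_bigr => b _; rewrite big_distrr; apply: eq_bigr => c _ /=; ring.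
Qed.

End Frame.

Section Gen.
Variable R : realType.
Local Open Scope classical_set_scope.
Local Open Scope ring_scope.

Lemma derive_quot (V W : normedModType R) (f : V -> W) (x v : V) (c : W) :
  (forall h : R, h != 0 -> h^-1 *: (f (h *: v + x) - f x) = c) -> 'D_v f x = c.
Proof.
move=> H; rewrite /derive; apply: cvg_lim => //.
have Hn : {near 0^', (fun=> c) =1 (fun h : R => h^-1 *: ((f \o shift x) (h *: v) - f x))}.
  near=> h; rewrite /= H //.
  by near: h; exact: nbhs_dnbhs_neq.
apply: (cvg_trans (near_eq_cvg Hn)); exact: cvg_cst.
Unshelve. all: by end_near.
Qed.

Lemma cvg_sum_fun {T : Type} {F : set_system T} {FF : Filter F} (V : normedModType R)
  (I : eqType) (s : seq I) (P : pred I) (f : I -> T -> V) (l : I -> V) :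
  (forall i, P i -> f i @ F --> l i) ->
  (fun x => \sum_(i <- s | P i) f i x) @ F --> \sum_(i <- s | P i) l i.
Proof.
move=> H; elim: s => [|i s IH].
  have -> : (fun x => \sum_(i <- [::] | P i) f i x) = fun=> 0 by apply/funext => x; rewrite big_nil.
  by rewrite big_nil; exact: cvg_cst.
have -> : (fun x => \sum_(j <- i :: s | P j) f j x) =
   (fun x => (if P i then f i x else 0) + \sum_(j <- s | P j) f j x).
  by apply/funext => x; rewrite big_cons; case: (P i); rewrite ?add0r.
rewrite big_cons; case: (boolP (P i)) => Pi.
  exact: cvgD (H i Pi) IH.
apply: cvg_trans IH; apply: near_eq_cvg; near=> x; by rewrite add0r.
Unshelve. all: by end_near.
Qed.

End Gen.

Section MxGen.
Variable R : realType.
Lemma invmx_uniq (A B : 'M[R]_4) : A *m B = 1%:M -> invmx A = B.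
Proof.
move=> H; have [u1 u2] := mulmx1_unit H.
by rewrite -[RHS]mul1mx -(mulVmx u1) -[(_ *m A) *m _]mulmxA H mulmx1.
Qed.

Lemma invmx_mulmx (A B : 'M[R]_4) : A \in unitmx -> B \in unitmx ->
  invmx (A *m B) = invmx B *m invmx A.
Proof.
move=> uA uB; apply: invmx_uniq.
by rewrite -mulmxA (mulmxA B) mulmxV // mul1mx mulmxV.
Qed.

Lemma sandwich (A : 'M[R]_4) i j : (Eta R *m A *m Eta R) i j = etaM R i i * A i j * etaM R j j.
Proof.
rewrite !mxE (@sum_only R _ j).
  rewrite !mxE (@sum_only R _ i) ?mxE //.
  by move=> k ki; rewrite mxE (@etaMd R i k) ?mul0r // eq_sym.
by move=> k kj; rewrite [Eta R k j]mxE (@etaMd R k j) ?mulr0.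
Qed.
End MxGen.

Section Conv.
Variable R : realType.
Variable w : nat -> nat -> R.

Lemma etaM_nat (a : 'I_4) : etaM R a a = etan R a.
Proof. by rewrite /etaM /etan eqxx; case: a => [[|k] ?]. Qed.

Lemma Sf_nat (b c e : 'I_4) : Sf R (fun a b c : 'I_4 => Kn R w a b c) b c e = Sn R w b c e.
Proof. by rewrite /Sf /Uf /Sn !etaM_nat. Qed.

Lemma Tsc_nat : Tsc R (fun a b c : 'I_4 => Kn R w a b c) = Tn R w.
Proof.
rewrite /Tsc /Tn; apply: eq_bigr => a _; apply: eq_bigr => b _; apply: eq_bigr => c _.
by rewrite Sf_nat etaM_nat.
Qed.
End Conv.

Section Obs.
Local Open Scope classical_set_scope.
Local Open Scope ring_scope.
Variables (R : realType) (z : R -> 'rV[R]_4)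
  (E : 'I_4 -> R -> 'rV[R]_4) (e : 'rV[R]_4 -> 'I_4 -> 'rV[R]_4)
  (D : set 'rV[R]_4).
Hypothesis hz : smooth_curve z.
Hypothesis hE : forall a, smooth_curve (E a).
Hypothesis hz' : forall t, E ord0 t = derive1 z t.
Hypothesis horth : forall t a b, mink (E a t) (E b t) = etaM R a b.
Hypothesis hD : open D.
Hypothesis hsc : forall y s, D y -> 0 <= s <= 1 -> D (spatial_scale s y).
Hypothesis he0 : forall y a, D y -> e (spatial_scale 0 y) a = E a (y 0 ord0).
Hypothesis hrad : forall y a s, D y -> D (spatial_scale s y) ->
       is_derive s 1 (fun r => e (spatial_scale r y) a) 0.

Lemma e_on_D y a : D y -> e y a = E a (y 0 ord0).
Proof.
move=> Dy.
have s1 : spatial_scale 1 y = y.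
  apply/matrixP => i j; rewrite !mxE (ord1 i); case: ifP => // _; by rewrite mul1r.
rewrite -[in LHS]s1 -(he0 y a Dy); apply/matrixP => i j; rewrite (ord1 i).
pose g : R -> R := fun r => e (spatial_scale r y) a 0 j.
suff : g 1 = g 0 by [].
have Hd : forall r : R, 0 <= r <= 1 -> is_derive r 1 g 0.
  move=> r hr; have [d dv] := hrad y a r Dy (hsc y r Dy hr).
  apply: DeriveDef; first exact: ((derivable_mxP _ _ _).1 d 0 j).
  have := congr1 (fun M : 'M[R]_(1,4) => M 0 j) (derive_mx d).
  by rewrite dv mxE /= mxE.
have cont : {within `[0, 1], continuous g}.
  apply: continuous_in_subspaceT => r; rewrite inE /= in_itv /= => hr.
  have [d _] := Hd r hr.
  exact/differentiable_continuous/derivable1_diffP.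
have Hd' : forall x : R, x \in `]0, 1[ -> is_derive x 1 g 0.
  by move=> x; rewrite in_itv /= => /andP [h0 h1]; apply: Hd; rewrite !ltW.
have [c _ Hc] := MVT_segment ler01 Hd' cont.
by move: Hc; rewrite mul0r => /eqP; rewrite subr_eq0 => /eqP.
Qed.

Lemma coord_dirE (h : R) (mu k : 'I_4) (y : 'rV[R]_4) :
  (h *: coord_dir R mu + y) 0 k = (if mu == k then h else 0) + y 0 k.
Proof. rewrite !mxE eqxx /= eq_sym; case: (mu == k); by rewrite ?mulr1 ?mulr0. Qed.

Definition Jrow0 (y : 'rV[R]_4) : 'rV[R]_4 :=
  derive1 z (y 0 ord0) + \sum_(i < 4 | i != ord0) y 0 i *: derive1 (E i) (y 0 ord0).

Definition Jrow (y : 'rV[R]_4) (mu : 'I_4) : 'rV[R]_4 :=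
  if mu == ord0 then Jrow0 y else E mu (y 0 ord0).

Lemma dPhi y mu : 'D_(coord_dir R mu) (obsPhi z E) y = Jrow y mu.
Proof.
rewrite /Jrow; case: eqP => [->|/eqP mu0].
  rewrite /derive; apply: cvg_lim => //.
  have -> : (fun h : R => h^-1 *: ((obsPhi z E \o shift y) (h *: coord_dir R ord0) - obsPhi z E y)) =
     (fun h : R => h^-1 *: (z (h *: 1 + y 0 ord0) - z (y 0 ord0)) +
        \sum_(i < 4 | i != ord0) y 0 i *: (h^-1 *: (E i (h *: 1 + y 0 ord0) - E i (y 0 ord0)))).
    apply/funext => h /=; rewrite /obsPhi coord_dirE eqxx.
    have -> : \sum_(i < 4 | i != ord0) (h *: coord_dir R ord0 + y) 0 i *: E i (h + y 0 ord0) =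
              \sum_(i < 4 | i != ord0) y 0 i *: E i (h + y 0 ord0).
      apply: eq_bigr => i i0; rewrite coord_dirE eq_sym (negPf i0) add0r //.
    rewrite [h *: 1]mulr1 opprD addrACA -sumrB scalerDr scaler_sumr; congr (_ + _).
    by apply: eq_bigr => i _; rewrite -scalerBr !scalerA mulrC.
  rewrite /Jrow0 derive1E; apply: cvgD; first exact: (hz 0%N (y 0 ord0)).
  apply: cvg_sum_fun => i _; rewrite derive1E; apply: cvgZl_tmp.
  exact: (hE i 0%N (y 0 ord0)).
apply: derive_quot => h h0.
rewrite /obsPhi coord_dirE (negPf mu0) add0r.
have -> : \sum_(i < 4 | i != ord0) (h *: coord_dir R mu + y) 0 i *: E i (y 0 ord0) =
          h *: E mu (y 0 ord0) + \sum_(i < 4 | i != ord0) y 0 i *: E i (y 0 ord0).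
  rewrite (bigD1 mu) //= [in RHS](bigD1 mu) //= addrA; congr (_ + _).
    by rewrite coord_dirE eqxx scalerDl.
  apply: eq_bigr => i /andP [i0 imu]; rewrite coord_dirE eq_sym (negPf imu) add0r //.
by rewrite addrCA addrK scalerA mulVf // scale1r.
Qed.


Definition Ec (t : R) : 'M[R]_4 := \matrix_(a, n) E a t 0 n.
Definition EcInv (t : R) : 'M[R]_4 := Eta R *m (Ec t)^T *m Eta R.

Lemma EcK t : Ec t *m EcInv t = 1%:M.
Proof.
apply/matrixP => a b; rewrite !mxE.
under eq_bigr do rewrite sandwich !mxE.
transitivity (mink (E a t) (E b t) * etaM R b b).
  rewrite /mink big_distrl; apply: eq_bigr => k _ /=; ring.
rewrite horth; have [<-|ab] := eqVneq a b; first by rewrite eta2 ?eqxx.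
by rewrite (@etaMd R a b ab) mul0r.
Qed.

Lemma EcKV t : EcInv t *m Ec t = 1%:M.
Proof. exact: mulmx1C (EcK t). Qed.

Lemma Ec_unit t : Ec t \in unitmx.
Proof. by have [] := mulmx1_unit (EcK t). Qed.

Lemma invEc t : invmx (Ec t) = EcInv t.
Proof. exact: invmx_uniq (EcK t). Qed.

Definition cc (a : 'I_4) (y : 'rV[R]_4) : R := etaM R a a * mink (Jrow0 y) (E a (y 0 ord0)).
Definition Cf (y : 'rV[R]_4) (a mu : 'I_4) : R := if mu == ord0 then cc a y else (a == mu)%:R.
Definition Mm (y : 'rV[R]_4) : 'M[R]_4 := \matrix_(mu, a) Cf y a mu.

Lemma JEc y : jac (obsPhi z E) y *m EcInv (y 0 ord0) = Mm y.
Proof.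
apply/matrixP => mu a; rewrite !mxE.
under eq_bigr do rewrite sandwich !mxE dPhi.
transitivity (etaM R a a * mink (Jrow y mu) (E a (y 0 ord0))).
  rewrite /mink big_distrr; apply: eq_bigr => k _ /=; ring.
rewrite /Cf /Jrow /cc; case: (mu == ord0) => //.
rewrite horth; have [<-|ab] := eqVneq mu a; first by rewrite eta2 ?eqxx.
by rewrite (@etaMd R mu a ab) mulr0.
Qed.

Lemma J_eq y : jac (obsPhi z E) y = Mm y *m Ec (y 0 ord0).
Proof. by rewrite -JEc -mulmxA EcKV mulmx1. Qed.

Lemma detMm y : \det (Mm y) = cc ord0 y.
Proof.
rewrite -det_tr det_trig.
  rewrite big_ord_recl big1 ?mulr1; first by rewrite !mxE /Cf eqxx.
  by move=> i _; rewrite !mxE /Cf eqxx.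
apply/is_trig_mxP => i j ij; rewrite !mxE /Cf.
have j0 : j != ord0 by rewrite -val_eqE /= -lt0n (leq_ltn_trans _ ij).
have ij' : i != j by rewrite -val_eqE /= ltn_eqF.
by rewrite (negPf j0) (negPf ij').
Qed.

Lemma J_unit y : (jac (obsPhi z E) y \in unitmx) = (cc ord0 y != 0).
Proof.
rewrite unitmxE J_eq det_mulmx detMm unitrM.
have := Ec_unit (y 0 ord0); rewrite unitmxE => ->.
by rewrite andbT unitfE.
Qed.

Lemma Mm_unit y : (Mm y \in unitmx) = (cc ord0 y != 0).
Proof. by rewrite unitmxE detMm unitfE. Qed.

Lemma F_eq y : D y -> cc ord0 y != 0 -> frame_obs z E e y = invmx (Mm y).
Proof.
move=> Dy c0; rewrite /frame_obs J_eq invmx_mulmx ?Mm_unit ?Ec_unit //.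
have -> : frame_cart e y = Ec (y 0 ord0).
  by apply/matrixP => a n; rewrite !mxE e_on_D.
by rewrite mulKVmx // Ec_unit.
Qed.

Lemma cof_eq y a mu : D y -> cc ord0 y != 0 -> cof (frame_obs z E e) y a mu = Cf y a mu.
Proof.
by move=> Dy c0; rewrite /cof F_eq // invmxK !mxE.
Qed.


Lemma mink_cvg {T : Type} {F : set_system T} {FF : Filter F} (u v : T -> 'rV[R]_4) u0 v0 :
  u @ F --> u0 -> v @ F --> v0 -> (fun x => mink (u x) (v x)) @ F --> mink u0 v0.
Proof.
move=> Hu Hv; rewrite /mink; apply: cvg_sum_fun => m _.
apply: cvgM; first apply: cvgM; first exact: cvg_cst.
  exact: (continuous_cvg _ (@coord_continuous R 1 4 0 m u0) Hu).
exact: (continuous_cvg _ (@coord_continuous R 1 4 0 m v0) Hv).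
Qed.

Lemma cont_curve (g : R -> 'rV[R]_4) (xb : 'rV[R]_4) : derivable g (xb 0 ord0) 1 ->
  (fun y : 'rV[R]_4 => g (y 0 ord0)) @ xb --> g (xb 0 ord0).
Proof.
move=> dg; apply: (continuous_cvg _ _ (@coord_continuous R 1 4 0 ord0 xb)).
exact/differentiable_continuous/derivable1_diffP.
Qed.

Lemma Jrow0_cvg xb : Jrow0 @ xb --> Jrow0 xb.
Proof.
have H1 := @cont_curve (derive1 z) xb (hz 1%N (xb 0 ord0)).
have H2 : (fun y : 'rV[R]_4 => \sum_(i < 4 | i != ord0) y 0 i *: derive1 (E i) (y 0 ord0)) @ xb -->
    \sum_(i < 4 | i != ord0) xb 0 i *: derive1 (E i) (xb 0 ord0).
  apply: (@cvg_sum_fun _ _ (nbhs xb)) => i _; apply: cvgZ.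
    exact: (@coord_continuous R 1 4 0 i xb).
  exact: (@cont_curve (derive1 (E i)) xb (hE i 1%N _)).
exact: (cvgD H1 H2).
Qed.

Lemma cc_cvg a xb : cc a @ xb --> cc a xb.
Proof.
have H : (fun y : 'rV[R]_4 => mink (Jrow0 y) (E a (y 0 ord0))) @ xb --> mink (Jrow0 xb) (E a (xb 0 ord0)).
  exact: (@mink_cvg _ (nbhs xb) _ _ _ _ _ (Jrow0_cvg xb) (@cont_curve (E a) xb (hE a 0%N _))).
exact: (cvgM (cvg_cst (etaM R a a)) H).
Qed.

Lemma near_good xb : D xb -> cc ord0 xb != 0 -> \forall y \near xb, D y /\ cc ord0 y != 0.
Proof.
move=> Dxb c0; have hc : 0 < `|cc ord0 xb| by rewrite normr_gt0.
have N2 := cvgr_dist_lt _ _ (cc_cvg ord0 xb) _ hc.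
have N1 : \forall y \near xb, D y by exact: hD.
near=> y; split; first by near: y.
apply/negP => /eqP cy0.
have : `|cc ord0 xb - cc ord0 y| < `|cc ord0 xb| by near: y; apply: N2.
by rewrite cy0 subr0 ltxx.
Unshelve. all: by end_near.
Qed.

Lemma mink_lin (u w v : 'rV[R]_4) (k : R) : mink (u + k *: w) v = mink u v + k * mink w v.
Proof.
rewrite /mink big_distrr -big_split; apply: eq_bigr => m _ /=; rewrite !mxE; ring.
Qed.

Lemma Jrow0_shift xb h j : j != ord0 ->
  Jrow0 (h *: coord_dir R j + xb) = Jrow0 xb + h *: derive1 (E j) (xb 0 ord0).
Proof.
move=> j0; rewrite /Jrow0 coord_dirE (negPf j0) add0r -addrA; congr (_ + _).
under eq_bigr => i i0 do rewrite coord_dirE scalerDl.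
rewrite big_split /= addrC; congr (_ + _).
rewrite (bigD1 j) //= eqxx big1 ?addr0 // => i /andP [_ ij].
by rewrite eq_sym (negPf ij) scale0r.
Qed.

Lemma cof_near xb a n : D xb -> cc ord0 xb != 0 ->
  \forall y \near xb, cof (frame_obs z E e) y a n = Cf y a n.
Proof.
move=> Dxb c0; have N := near_good xb Dxb c0.
near=> y; have [Dy cy] : D y /\ cc ord0 y != 0 by near: y.
exact: cof_eq.
Unshelve. all: by end_near.
Qed.

Lemma dCf_const xb a n v : D xb -> cc ord0 xb != 0 -> n != ord0 ->
  'D_v (fun y => cof (frame_obs z E e) y a n) xb = 0.
Proof.
move=> Dxb c0 n0; rewrite (near_eq_derive _ (cof_near xb a n Dxb c0)).
have -> : (fun y => Cf y a n) = cst ((a == n)%:R) by apply/funext => y; rewrite /Cf (negPf n0).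
exact: derive_cst.
Qed.

Lemma dCf_sp xb a j : D xb -> cc ord0 xb != 0 -> j != ord0 ->
  'D_(coord_dir R j) (fun y => cof (frame_obs z E e) y a ord0) xb =
    etaM R a a * mink (derive1 (E j) (xb 0 ord0)) (E a (xb 0 ord0)).
Proof.
move=> Dxb c0 j0; rewrite (near_eq_derive _ (cof_near xb a ord0 Dxb c0)).
apply: derive_quot => h h0.
rewrite /Cf eqxx /cc Jrow0_shift // coord_dirE (negPf j0) add0r mink_lin.
rewrite -mulrBr addrC addKr.
have -> : forall k x : R, k *: x = k * x by [].
by field.
Qed.

Definition Qq (xb : 'rV[R]_4) (a j : 'I_4) : R :=
  mink (derive1 (E j) (xb 0 ord0)) (E a (xb 0 ord0)).

Lemma tors_val xb a m n : D xb -> cc ord0 xb != 0 ->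
  torsion (frame_obs z E e) xb a m n =
    (if (n == ord0) && (m != ord0) then etaM R a a * Qq xb a m else 0)
  - (if (m == ord0) && (n != ord0) then etaM R a a * Qq xb a n else 0).
Proof.
move=> Dxb c0; rewrite /torsion.
case: (eqVneq n ord0) => [->|n0]; case: (eqVneq m ord0) => [->|m0] /=.
- by rewrite !subrr.
- by rewrite dCf_sp // (dCf_const _ _ _ _ Dxb c0 m0) !subr0.
- by rewrite dCf_sp // (dCf_const _ _ _ _ Dxb c0 n0) sub0r.
- by rewrite (dCf_const _ _ _ _ Dxb c0 m0) (dCf_const _ _ _ _ Dxb c0 n0) subrr.
Qed.

Lemma comp_derive (g : R -> 'rV[R]_4) t m : derivable g t 1 ->
  is_derive t 1 (fun s => g s 0 m) (derive1 g t 0 m).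
Proof.
move=> d; apply: DeriveDef; first exact: ((derivable_mxP _ _ _).1 d 0 m).
have := congr1 (fun M : 'M[R]_(1,4) => M 0 m) (derive_mx d).
by rewrite derive1E mxE => ->.
Qed.

Lemma mink_deriv0 a b t :
  mink (derive1 (E a) t) (E b t) + mink (E a t) (derive1 (E b) t) = 0.
Proof.
pose hm (m : 'I_4) : R -> R := (cst (etaM R m m) * (fun s => E a s 0 m)) * (fun s => E b s 0 m).
pose dm (m : 'I_4) : R := etaM R m m * E a t 0 m * derive1 (E b) t 0 m
   + E b t 0 m * (etaM R m m * derive1 (E a) t 0 m + E a t 0 m * 0).
have H : is_derive t 1 (\sum_(m < 4) hm m) (\sum_(m < 4) dm m).
  apply: is_derive_sum => m; rewrite /hm /dm.
  apply: is_deriveM; last exact: comp_derive (hE b 0%N t).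
  apply: is_deriveM.
  exact: comp_derive (hE a 0%N t).
have Hf : \sum_(m < 4) hm m = cst (etaM R a b).
  apply/funext => s; rewrite fct_sumE /cst -(horth s a b) /mink.
  by apply: eq_bigr => m _.
move: H; rewrite Hf => H.
have : \sum_(m < 4) dm m = 0.
  by rewrite -(@derive_val _ _ _ _ _ _ _ H) derive_cst.
move=> <-; rewrite /mink -big_split; apply: eq_bigr => m _ /=; rewrite /dm; ring.
Qed.

Lemma mink_sym (u v : 'rV[R]_4) : mink u v = mink v u.
Proof. by rewrite /mink; apply: eq_bigr => m _; rewrite mulrAC. Qed.

Lemma Qq_anti xb a b : Qq xb b a = - Qq xb a b.
Proof.
have H := mink_deriv0 b a (xb 0 ord0).
rewrite /Qq mink_sym; lra.
Qed.

Lemma Qq_diag xb a : Qq xb a a = 0.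
Proof. by have := Qq_anti xb a a; lra. Qed.

Lemma Cf_nat xb (b mu : 'I_4) : Cf xb b mu = Cfn R (fun k => cc (inord k) xb) b mu.
Proof.
rewrite /Cf /Cfn inord_val; by case: mu => [[|k] ?].
Qed.

Lemma main_in xb m a : D xb -> jac (obsPhi z E) xb \in unitmx ->
  gravEM (frame_obs z E e) xb m a = 0.
Proof.
move=> Dxb Ju.
have c0 : cc ord0 xb != 0 by rewrite -J_unit.
have hF : frame_obs z E e xb \in unitmx by rewrite F_eq // unitmx_inv Mm_unit.
pose cn k := cc (inord k) xb.
pose qn a b := Qq xb (inord a) (inord b).
have cn0 : cn 0%N != 0.
  by rewrite /cn (_ : inord 0 = ord0) //; apply/val_inj; rewrite /= inordK.
pose w := wq R cn qn.
have htor : forall a m n, torsion (frame_obs z E e) xb a m n =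
   \sum_(b < 4) \sum_(c < 4) cof (frame_obs z E e) xb b m * cof (frame_obs z E e) xb c n
      * (fun a b c : 'I_4 => Kn R w a b c) a b c.
  move=> a' m' n'; rewrite tors_val //.
  under eq_bigr do under eq_bigr do rewrite !cof_eq // !Cf_nat.
  rewrite htor_nat // /qn !inord_val !etaM_nat //.
have w11 : w 1%N 1%N = 0 by rewrite /w /wq /qn Qq_diag mulr0 mul0r.
have w22 : w 2%N 2%N = 0 by rewrite /w /wq /qn Qq_diag mulr0 mul0r.
have w33 : w 3%N 3%N = 0 by rewrite /w /wq /qn Qq_diag mulr0 mul0r.
have w21 : w 2%N 1%N = - w 1%N 2%N by rewrite /w /wq /qn Qq_anti /etan /=; ring.
have w31 : w 3%N 1%N = - w 1%N 3%N by rewrite /w /wq /qn Qq_anti /etan /=; ring.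
have w32 : w 3%N 2%N = - w 2%N 3%N by rewrite /w /wq /qn Qq_anti /etan /=; ring.
rewrite (@L_gravEM R _ _ hF _ htor) Tsc_nat (@Tn0 R w w11 w22 w33 w21 w31 w32) mulr0 subr0.
rewrite big1 ?mulr0 // => e' _.
have := @Gn0 R w w11 w22 w33 w21 w31 w32 _ _ (ltn_ord e') (ltn_ord a).
rewrite /Gn (@Tn0 R w w11 w22 w33 w21 w31 w32) mulr0 subr0 => /eqP.
rewrite mulf_eq0 pnatr_eq0 /= => /eqP H.
apply/eqP; rewrite mulf_eq0; apply/orP; right; apply/eqP; apply: (etrans _ H).
apply: eq_bigr => b _; apply: eq_bigr => c _; by rewrite Sf_nat !etaM_nat.
Qed.

End Obs.


Theorem mainTheorem1 (R : realType) (z : R -> 'rV[R]_4)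
  (E : 'I_4 -> R -> 'rV[R]_4) (e : 'rV[R]_4 -> 'I_4 -> 'rV[R]_4)
  (D : set 'rV[R]_4) :
  smooth_curve z ->
  (forall a, smooth_curve (E a)) ->
  (forall t, E ord0 t = derive1 z t) ->
  (forall t a b, mink (E a t) (E b t) = etaM R a b) ->
  open D ->
  (forall y s, D y -> 0 <= s <= 1 -> D (spatial_scale s y)) ->
  (forall y a, D y -> e (spatial_scale 0 y) a = E a (y 0 ord0)) ->
  (forall y a s, D y -> D (spatial_scale s y) ->
       is_derive s 1 (fun r => e (spatial_scale r y) a) 0) ->
  forall xb, D xb -> jac (obsPhi z E) xb \in unitmx ->
  forall m a, gravEM (frame_obs z E e) xb m a = 0.
Proof.
move=> hz hE hz' horth hD hsc he0 hrad xb Dxb Ju m a.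
by eapply main_in; eassumption.
Qed.
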